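(* Let $k\geq 4$ and let $\alpha>0$ be sufficiently small. There exist infinitely many integers $N\geq 1$ and sets $A\subseteq \{1,2,\dots,N\}$ with $|A|\geq \alpha N$ such that $A$ contains no more than \[\exp\bigl(-c\log^2(2/\alpha)\bigr)N^{k-1}\] solutions $(x_1,\dots,x_k)\in A^k$ to the equation $x_1+\cdots+x_{k-1}=(k-1)x_k$, where $c>0$ is a constant. *)

(* Defs.v *)
From mathcomp Require Import all_boot.
From Stdlib Require Import Reals.

Unset Printing Implicit Defensive.

(* A subset of {1,...,N} is represented as A : {set 'I_N.+1} with 0 \notin A. *)

Definition nsol (k N : nat) (A : {set 'I_N.+1}) : nat :=
  #|[set p : {ffun 'I_k.-1 -> 'I_N.+1} * 'I_N.+1 |
       [forall i, p.1 i \in A] && (p.2 \in A) &&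
       ((\sum_(i < k.-1) (p.1 i : nat))%N == (k.-1 * p.2)%N)]|.

(* Main.v *)
Require Import Defs.
From mathcomp Require Import all_boot.
From Stdlib Require Import Reals.
From mathcomp Require Import zify.
From Stdlib Require Import Lra Classical.
Set Warnings "-notation-overridden".
From mathcomp Require Import ssrnat.


Lemma digits_uniq (B d : nat) (a b : 'I_d -> nat) : 0 < B ->
  (forall i, a i < B) -> (forall i, b i < B) ->
  \sum_(i < d) a i * B ^ i = \sum_(i < d) b i * B ^ i -> forall i, a i = b i.
Proof.
move=> B0; elim: d a b => [|d IH] a b Ha Hb; first by move=> _ [].
rewrite !big_ord_recl /= !expn0 !muln1.
have sh : forall c : 'I_d.+1 -> nat, \sum_(i < d) c (lift ord0 i) * B ^ bump 0 i
   = B * \sum_(i < d) c (lift ord0 i) * B ^ i.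
  move=> c; rewrite big_distrr /=; apply: eq_bigr => i _.
  by rewrite /bump /= add1n expnS mulnCA.
rewrite !sh => E.
have E0 : a ord0 = b ord0.
  have := congr1 (fun x => x %% B) E => /=.
  by rewrite ![_ + B * _]addnC ![B * _]mulnC !modnMDl !modn_small.
move: E; rewrite E0 => /eqP; rewrite eqn_add2l eqn_pmul2l // => /eqP E.
have IH' := IH (fun i => a (lift ord0 i)) (fun i => b (lift ord0 i)) (fun i => Ha _) (fun i => Hb _) E.
case=> [[|i] Hi].
  by have -> : Ordinal Hi = ord0 by apply: val_inj.
have Hi' : i < d by [].
have -> : Ordinal Hi = lift ord0 (Ordinal Hi') by apply: val_inj.
exact: IH'.
Qed.

Lemma digits_lt (B d : nat) (a : 'I_d -> nat) :
  (forall i, a i < B) -> \sum_(i < d) a i * B ^ i < B ^ d.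
Proof.
elim: d a => [|d IH] a Ha; first by rewrite big_ord0.
rewrite big_ord_recl /= expn0 muln1.
have -> : \sum_(i < d) a (lift ord0 i) * B ^ bump 0 i
   = B * \sum_(i < d) a (lift ord0 i) * B ^ i.
  rewrite big_distrr /=; apply: eq_bigr => i _.
  by rewrite /bump /= add1n expnS mulnCA.
have := IH (fun i => a (lift ord0 i)) (fun i => Ha _).
have := Ha ord0. rewrite expnS.
set X := \sum_(i < d) _. set P := B ^ d. nia.
Qed.

Lemma sphere (K d r : nat) (v : 'I_K -> 'I_d -> nat) (w : 'I_d -> nat) :
  (forall l, \sum_(j < K) v j l = K * w l) ->
  (forall j, \sum_(l < d) v j l ^ 2 = r) ->
  \sum_(l < d) w l ^ 2 = r ->
  forall j l, v j l = w l.
Proof.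
move=> Hs Hv Hw.
pose E j l := (v j l - w l) ^ 2 + (w l - v j l) ^ 2.
have key : \sum_(j < K) \sum_(l < d) (v j l ^ 2 + w l ^ 2)
   = 2 * \sum_(j < K) \sum_(l < d) v j l * w l + \sum_(j < K) \sum_(l < d) E j l.
  rewrite big_distrr /= -big_split /=; apply: eq_bigr => j _.
  rewrite big_distrr /= -big_split /=; apply: eq_bigr => l _.
  rewrite /E. set a := v j l. set b := w l.
  case: (leqP a b) => h.
    have -> : a - b = 0 by lia.
    have -> : b = a + (b - a) by lia.
    set c := b - a. rewrite addKn !expnS !expn0 !muln1; nia.
  have -> : b - a = 0 by lia.
  have -> : a = b + (a - b) by lia.
  set c := a - b. rewrite addKn !expnS !expn0 !muln1; nia.
have S1 : \sum_(j < K) \sum_(l < d) (v j l ^ 2 + w l ^ 2) = K * r + K * r.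
  rewrite -[RHS]/((fun x => x) _).
  under eq_bigr => j _ do rewrite big_split /= Hv Hw.
  by rewrite big_split /= sum_nat_const card_ord mulnC.
have S2 : \sum_(j < K) \sum_(l < d) v j l * w l = K * r.
  rewrite exchange_big /=.
  under eq_bigr => l _ do rewrite -big_distrl /= Hs.
  rewrite -Hw big_distrr /=; apply: eq_bigr => l _; by rewrite mulnA.
rewrite S1 S2 in key.
have : \sum_(j < K) \sum_(l < d) E j l == 0 by apply/eqP; lia.
rewrite sum_nat_eq0 => /forallP H j l.
have := H j; rewrite sum_nat_eq0 => /forallP /(_ l) /=.
rewrite /E. set a := v j l. set b := w l.
case: (leqP a b) => h.
  have -> : a - b = 0 by lia.
  rewrite add0n expn_eq0 /= subn_eq0 => hh; lia.
have -> : b - a = 0 by lia.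
rewrite addn0 expn_eq0 /= subn_eq0 => hh; lia.
Qed.


Definition sq d m (v : {ffun 'I_d -> 'I_m}) : nat := \sum_(l < d) (v l : nat) ^ 2.
Arguments sq {d m}.

Lemma sq_le d m (v : {ffun 'I_d -> 'I_m}) : sq v <= d * m * m.
Proof.
have <- : \sum_(l < d) m * m = d * m * m by rewrite sum_nat_const card_ord mulnA.
apply: leq_sum => l _. have := ltn_ord (v l). set a := nat_of_ord (v l). rewrite expnS expn1. nia.
Qed.

Lemma pigeon (d m : nat) : exists j : 'I_(d*m*m).+1,
  m ^ d <= (d*m*m).+1 * #|[set v : {ffun 'I_d -> 'I_m} | inord (sq v) == j]|.
Proof.
set R := d*m*m.
set T := fun j : 'I_R.+1 => #|[set v : {ffun 'I_d -> 'I_m} | inord (sq v) == j]|.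
have H : m ^ d = \sum_(j : 'I_R.+1) T j.
  have -> : m ^ d = \sum_(v : {ffun 'I_d -> 'I_m}) 1.
    by rewrite sum1_card card_ffun !card_ord.
  rewrite (partition_big (fun v : {ffun 'I_d -> 'I_m} => inord (sq v) : 'I_R.+1) predT) //=.
  apply: eq_bigr => j _; rewrite /T -sum1_card; apply: eq_bigl => v; by rewrite !inE.
case: (pickP (fun j : 'I_R.+1 => m ^ d <= R.+1 * T j)) => [j Hj | H0]; first by exists j.
exfalso.
have : \sum_(j : 'I_R.+1) (R.+1 * T j).+1 <= \sum_(j : 'I_R.+1) m ^ d.
  apply: leq_sum => j _. have := H0 j. simpl. move/negbT. rewrite -ltnNge. done.
rewrite sum_nat_const card_ord.
under eq_bigr => j _ do rewrite -addn1.
rewrite big_split /= -big_distrr /= -H sum_nat_const card_ord. nia.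
Qed.


Definition enc (B d m : nat) (v : {ffun 'I_d -> 'I_m}) : nat :=
  \sum_(l < d) (v l : nat) * B ^ l.
Arguments enc B {d m}.

Lemma core (k m d T' : nat) (j : 'I_(d*m*m).+1) : 1 <= k.-1 -> 0 < m ->
  exists A : {set 'I_((k.-1 * m) ^ d * (k.-1 * T'.+1)).+1},
    ord0 \notin A /\
    #|A| = #|[set v : {ffun 'I_d -> 'I_m} | inord (sq v) == j]| * T'.+1 /\
    nsol k ((k.-1 * m) ^ d * (k.-1 * T'.+1)) A <= ((k.-1 * m) ^ d).+1 * T'.+1 ^ k.-1.
Proof.
move=> K1 m0.
set K := k.-1. set T := T'.+1. set B := K * m. set n := B ^ d. set M := K * T.
set N := n * M.
pose V := {ffun 'I_d -> 'I_m}.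
pose S := [set v : V | inord (sq v) == j].
have T0 : 0 < T by [].
have M0 : 0 < M by rewrite /M muln_gt0 K1.
have TM : T <= M by rewrite /M leq_pmull.
have mB : m <= B by rewrite /B leq_pmull.
have encB : forall v : V, enc B v < n.
  move=> v; apply: digits_lt => l. exact: leq_trans (ltn_ord _) mB.
pose f := fun u : V * 'I_T => (inord (enc B u.1 * M + u.2 + 1) : 'I_N.+1).
have fv : forall u, nat_of_ord (f u) = enc B u.1 * M + u.2 + 1.
  move=> u; rewrite /f inordK //.
  have := encB u.1. have := ltn_ord u.2. rewrite /N. set e := enc B u.1. set t := nat_of_ord u.2.
  move=> h1 h2. have : (e + 1) * M <= n * M by rewrite leq_mul2r; apply/orP; right; rewrite addn1.
  nia.
have divE : forall e t, t < M -> (e * M + t) %/ M = e.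
  by move=> e t ht; rewrite divnMDl // divn_small // addn0.
have modE : forall e t, t < M -> (e * M + t) %% M = t.
  by move=> e t ht; rewrite modnMDl modn_small.
have encI : forall v v' : V, enc B v = enc B v' -> v = v'.
  move=> v v' E. apply/ffunP => l. apply: val_inj.
  apply: (@digits_uniq B d (fun l => nat_of_ord (v l)) (fun l => nat_of_ord (v' l)) _ _ _ E).
  - by rewrite /B muln_gt0 K1.
  - move=> i; exact: leq_trans (ltn_ord _) mB.
  - move=> i; exact: leq_trans (ltn_ord _) mB.
have finj : injective f.
  move=> [v t] [v' t'] /(congr1 (@nat_of_ord _)); rewrite !fv /= => E.
  have E' : enc B v * M + t = enc B v' * M + t' by lia.
  have ht : (t : nat) < M by exact: leq_trans (ltn_ord t) TM.
  have ht' : (t' : nat) < M by exact: leq_trans (ltn_ord t') TM.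
  have Ee : enc B v = enc B v' by rewrite -(divE (enc B v) t) // E' divE.
  rewrite Ee in E'. have Et : t = t' by apply: val_inj => /=; lia.
  by rewrite (encI _ _ Ee) Et.
have sqS : forall v, v \in S -> sq v = j.
  move=> v; rewrite inE => /eqP <-; rewrite inordK // ltnS; exact: sq_le.
pose A := f @: (setX S [set: 'I_T]).
exists A; split.
  apply/imsetP => -[u _] /(congr1 (@nat_of_ord _)); rewrite fv /=. lia.
split.
  by rewrite card_imset // cardsX cardsT card_ord.
rewrite /nsol.
set Sol := [set p | _].
have St : forall p, p \in Sol -> exists e, [/\ e < n.+1,
     exists2 ty, ty < T & nat_of_ord p.2 = e * M + ty + 1 &
     forall i, exists2 t, t < T & nat_of_ord (p.1 i) = e * M + t + 1].
  move=> p; rewrite inE => /andP [/andP [/forallP H1 H2] /eqP Hs].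
  have : forall i, exists u, u \in setX S [set: 'I_T] /\ p.1 i = f u.
    by move=> i; case/imsetP: (H1 i) => u hu e; exists u.
  case/fin_all_exists => g Hg.
  case/imsetP: H2 => u0 Hu0 Ep2.
  set w := u0.1.
  have Hgs : forall i, (g i).1 \in S.
    by move=> i; case: (Hg i); rewrite inE => /andP [h _] _.
  have HwS : w \in S by move: Hu0; rewrite inE => /andP [h _].
  rewrite Ep2 fv in Hs.
  have Hs2 : \sum_(i < K) nat_of_ord (p.1 i) = \sum_(i < K) (enc B (g i).1 * M + (g i).2 + 1).
    by apply: eq_bigr => i _; rewrite (proj2 (Hg i)) fv.
  rewrite Hs2 in Hs.
  rewrite !big_split /= -big_distrl /= sum_nat_const card_ord in Hs.
  set E := \sum_(i < K) enc B (g i).1 in Hs.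
  set X := \sum_(i < K) nat_of_ord (g i).2 in Hs.
  have HX : X < M.
    have : X <= \sum_(i < K) T' by apply: leq_sum => i _; rewrite -ltnS.
    rewrite sum_nat_const card_ord /M /T. nia.
  have Hty : K * u0.2 < M by rewrite /M ltn_pmul2l.
  have Hs' : E * M + X = (K * enc B w) * M + K * u0.2.
    move: Hs. set e := enc B w. set ty := nat_of_ord u0.2. nia.
  have EK : E = K * enc B w by rewrite -(divE E X) // Hs' divE.
  have dig : forall l, \sum_(i < K) nat_of_ord ((g i).1 l) = K * w l.
    apply: (@digits_uniq B d).
    - by rewrite /B muln_gt0 K1.
    - move=> l. have : \sum_(i < K) nat_of_ord ((g i).1 l) <= \sum_(i < K) m.-1.
        by apply: leq_sum => i _; rewrite -ltnS prednK.
      rewrite sum_nat_const card_ord /B. nia.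
    - by move=> l; rewrite /B ltn_pmul2l.
    - move: EK; rewrite /E /enc exchange_big /=.
      under eq_bigr => l _ do rewrite -big_distrl /=.
      move=> ->. rewrite big_distrr /=; apply: eq_bigr => l _; by rewrite mulnA.
  have sph := @sphere K d j (fun i l => nat_of_ord ((g i).1 l)) (fun l => nat_of_ord (w l))
     dig (fun i => sqS _ (Hgs i)) (sqS _ HwS).
  exists (enc B w); split.
  - by rewrite ltnS ltnW.
  - exists (nat_of_ord u0.2) => //. by rewrite Ep2 fv.
  - move=> i. exists (nat_of_ord (g i).2) => //.
    rewrite (proj2 (Hg i)) fv. congr (_ * _ + _ + _).
    by rewrite /enc; apply: eq_bigr => l _; rewrite sph.
pose h := fun p : {ffun 'I_K -> 'I_N.+1} * 'I_N.+1 =>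
  ((inord ((nat_of_ord p.2).-1 %/ M) : 'I_n.+1),
   [ffun i => (inord ((nat_of_ord (p.1 i)).-1 %% M) : 'I_T)]).
have hinj : {in Sol &, injective h}.
  move=> p q Hp Hq Ehpq.
  have [e [he [ty hty Ep2] Ep1]] := St p Hp.
  have [e' [he' [ty' hty' Eq2] Eq1]] := St q Hq.
  have tyM : ty < M by exact: leq_trans hty TM.
  have tyM' : ty' < M by exact: leq_trans hty' TM.
  have ee : e = e'.
    have := congr1 (fun x => nat_of_ord x.1) Ehpq => /=.
    rewrite Ep2 Eq2 !addn1 /= !divE // !inordK //.
  have E1 : p.1 = q.1.
    apply/ffunP => i; apply: val_inj.
    have [t ht Et] := Ep1 i. have [t' ht' Et'] := Eq1 i.
    have := congr1 (fun x : 'I_n.+1 * {ffun 'I_K -> 'I_T} => nat_of_ord (x.2 i)) Ehpq => /=.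
    rewrite !ffunE Et Et' !addn1 /= !modE; try exact: leq_trans ht TM; try exact: leq_trans ht' TM.
    rewrite !inordK // => tt. by rewrite ee tt.
  have E2 : p.2 = q.2.
    move: Hp Hq; rewrite !inE => /andP [_ /eqP Hp] /andP [_ /eqP Hq].
    apply: val_inj. apply/eqP. rewrite -(eqn_pmul2l K1) -Hp -Hq E1 //.
  by move: E1 E2; case: p {Ehpq Hp St Ep1 Ep2} => a b; case: q {Hq Eq1 Eq2} => a' b' /= -> ->.
rewrite -(card_in_imset hinj).
apply: leq_trans (max_card _) _.
by rewrite card_prod card_ffun !card_ord.
Qed.


Lemma INRM m n : INR (m * n)%N = (INR m * INR n)%R.
Proof. by rewrite -multE mult_INR. Qed.

Lemma INRX m n : INR (m ^ n)%N = (INR m ^ n)%R.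
Proof. elim: n => [|n IH] //=. by rewrite expnS INRM IH. Qed.

Lemma INR_le' m n : (m <= n)%N -> (INR m <= INR n)%R.
Proof. by move/leP; apply: le_INR. Qed.
Arguments INR_le' {m n}.

Lemma ln_le' x y : (0 < x)%R -> (x <= y)%R -> (ln x <= ln y)%R.
Proof.
move=> x0 [h|->]; last by apply: Rle_refl.
by apply: Rlt_le; apply: ln_increasing.
Qed.

Lemma exp_le' x y : (x <= y)%R -> (exp x <= exp y)%R.
Proof. move=> [h|->]; [by apply: Rlt_le; apply: exp_increasing | apply: Rle_refl]. Qed.

Lemma last_true (P : nat -> Prop) n : P 1 -> ~ P n.+1 ->
  exists d, (1 <= d)%N /\ P d /\ ~ P d.+1.
Proof.
move=> P1; elim: n => [|n IH] Hn; first by [].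
case: (classic (P n.+1)) => h; first by exists n.+1.
exact: IH.
Qed.

Theorem theorem4 :
  forall k : nat, (4 <= k)%N ->
  exists c : R, (0 < c)%R /\
  exists alpha0 : R, (0 < alpha0)%R /\
  forall alpha : R, (0 < alpha)%R -> (alpha < alpha0)%R ->
  forall M : nat, exists N : nat, (M <= N)%N /\ (1 <= N)%N /\
    exists A : {set 'I_N.+1},
      ord0 \notin A /\
      (alpha * INR N <= INR (#|A|))%R /\
      (INR (nsol k N A) <= exp (- c * (ln (2 / alpha)) ^ 2) * (INR N) ^ k.-1)%R.
Proof.
move=> k k4.
have K3 : (3 <= k.-1)%N by case: k k4 => [|k] //=; lia.
have K1 : (1 <= k.-1)%N by lia.
set K := k.-1 in K3 K1 *.
set Kr := INR K.
have Kr3 : (3 <= Kr)%R by have := @INR_le' 3 K K3; rewrite /Kr /=; lra.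
have Kr0 : (0 < Kr)%R by lra.
have lnK : (0 < ln Kr)%R by rewrite -ln_1; apply: ln_increasing; lra.
have K4pos : (0 < Kr ^ 4)%R by apply: pow_lt.
exists (/ (100 * ln Kr))%R; split.
  apply: Rinv_0_lt_compat; lra.
exists (/ (2 * Kr ^ 4))%R; split.
  apply: Rinv_0_lt_compat; lra.
move=> alpha a0 aa0 M0.
have aK : (alpha * (2 * Kr ^ 4) < 1)%R.
  have h := Rmult_lt_compat_r (2 * Kr ^ 4) _ _ ltac:(lra) aa0.
  by rewrite Rinv_l in h; [| lra].
have K4ge : (1 <= Kr ^ 4)%R by apply: pow_R1_Rle; lra.
have a1 : (alpha < 1)%R by nra.
pose P d := (2 * INR d * Kr ^ (3 * d + 1) * alpha <= 1)%R.
have P1 : P 1%N.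
  rewrite /P. have -> : (3 * 1 + 1 = 4)%N by []. rewrite /= ; lra.
have [D HD] := INR_unbounded (/ alpha).
have nPD : ~ P D.+1.
  rewrite /P => h.
  have h1 : (1 <= Kr ^ (3 * D.+1 + 1))%R by apply: pow_R1_Rle; lra.
  have h2 : (INR D <= INR D.+1)%R by apply: INR_le'.
  have h3 : (INR D * alpha > 1)%R.
    have := Rmult_lt_compat_r alpha _ _ a0 HD. rewrite Rinv_l; lra.
  have h5 : (INR D * alpha <= INR D.+1 * alpha)%R by apply: Rmult_le_compat_r; lra.
  move: h h1; set X := (Kr ^ _)%R; set Y := INR D.+1 => h h1.
  have e : (2 * Y * X * alpha = 2 * X * (Y * alpha))%R by ring.
  have hy : (Y * alpha > 1)%R.
    move: h3 h5. set Z1 := (INR D * alpha)%R. set Z2 := (Y * alpha)%R. lra.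
  have : (1 * (Y * alpha) <= X * (Y * alpha))%R by apply: Rmult_le_compat_r; lra.
  lra.
have [d [d1 [Pd nPd]]] := @last_true P D P1 nPD.
set m := (K ^ d)%N.
have m0 : (0 < m)%N by rewrite expn_gt0; lia.
have [j Hj] := pigeon d m.
have [A [HA0 [HAc HAs]]] := @core k m d M0 j K1 m0.
set s := #|[set v | inord (sq v) == j]| in HAc Hj.
set n := ((K * m) ^ d)%N.
set T := M0.+1.
set N := (n * (K * T))%N.
have n0 : (0 < n)%N by rewrite expn_gt0 muln_gt0 m0; lia.
have HAs' : (nsol k N A <= n.+1 * T ^ K)%N := HAs.
have HAc' : (#|A| = s * T)%N := HAc.
clear HAs HAc.
exists N; split.
  rewrite /N. have : (T <= K * T)%N by rewrite leq_pmull. nia.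
split.
  rewrite /N. have : (T <= K * T)%N by rewrite leq_pmull. nia.
exists A; split; first exact: HA0.
split.
  have id1 : (n * K * (d * m * m) = d * K ^ (3 * d + 1) * m ^ d)%N.
    rewrite /n expnMn. have -> : (3 * d + 1 = d + d + d + 1)%N by lia.
    rewrite !expnD expn1 -/m. nia.
  have idR : (INR n * Kr * (INR d * INR m * INR m) = INR d * Kr ^ (3 * d + 1) * INR m ^ d)%R.
    have := congr1 INR id1.
    by rewrite (INRM (n * K)) (INRM n K) (INRM (d * m) m) (INRM d m) (INRM (d * K ^ (3 * d + 1))) (INRM d) (INRX K) (INRX m).
  have HjR := INR_le' Hj.
  rewrite (INRM (d * m * m).+1 s) S_INR (INRM (d * m) m) (INRM d m) (INRX m d) in HjR.
  have Q1 : (1 <= INR d * INR m * INR m)%R.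
    rewrite -!INRM. exact: (@INR_le' 1 (d * m * m) ltac:(rewrite !muln_gt0 d1 m0)).
  have s0 : (0 <= INR s)%R by apply: pos_INR.
  have T0 : (0 <= INR T)%R by apply: pos_INR.
  have NR : INR N = (INR n * (Kr * INR T))%R by rewrite /N !INRM.
  rewrite HAc' NR INRM.
  move: Pd; rewrite /P => Pd.
  move: idR HjR Pd Q1; set U := (Kr ^ (3 * d + 1))%R; set V := (INR m ^ d)%R;
    set Q := (INR d * INR m * INR m)%R => idR HjR Pd Q1.
  have V0 : (0 <= V)%R by apply: pow_le; apply: pos_INR.
  have h1 : (2 * INR d * U * alpha * V <= V)%R.
    have := Rmult_le_compat_r V _ _ V0 Pd. lra.
  have h2 : (alpha * INR n * Kr * Q * 2 <= 2 * Q * INR s)%R.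
    have e : (alpha * INR n * Kr * Q * 2 = 2 * INR d * U * alpha * V)%R.
      rewrite -[RHS]/(2 * INR d * U * alpha * V)%R.
      have -> : (2 * INR d * U * alpha * V = 2 * alpha * (INR d * U * V))%R by ring.
      rewrite -idR. ring.
    rewrite e. have : (V <= 2 * Q * INR s)%R.
      apply: Rle_trans HjR _. have := Rmult_le_compat_r (INR s) _ _ s0 (Rplus_le_compat_l Q _ _ Q1). lra.
    lra.
  have h3 : (alpha * INR n * Kr <= INR s)%R.
    apply: (Rmult_le_reg_r (2 * Q)); first lra.
    have -> : (alpha * INR n * Kr * (2 * Q) = alpha * INR n * Kr * Q * 2)%R by ring.
    lra.
  have := Rmult_le_compat_r (INR T) _ _ T0 h3.
  have -> : (alpha * (INR n * (Kr * INR T)) = alpha * INR n * Kr * INR T)%R by ring.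
  done.
have bigN : (n.+1 * n * T ^ K <= N ^ K)%N.
  rewrite /N !expnMn.
  have h1 : (n * n <= n ^ K)%N.
    have := @leq_pexp2l n 2 K n0 ltac:(lia). by rewrite expnS expn1.
  have h2 : (K <= K ^ K)%N.
    have := @leq_pexp2l K 1 K K1 K1. by rewrite expn1.
  set a := (n ^ K)%N in h1 *. set b := (K ^ K)%N in h2 *. set c := (T ^ K)%N.
  have : (n.+1 * n * c <= 2 * n * n * c)%N by rewrite leq_mul2r; apply/orP; right; nia.
  have : (2 * n * n * c <= a * (b * c))%N.
    rewrite mulnA. rewrite leq_mul2r; apply/orP; right. nia.
  lia.
have powb : (4 * d.+1 * K ^ (3 * d.+1 + 1) <= K ^ (10 * d))%N.
  have h1 : (d.+1 <= K ^ d)%N by apply: ltn_expl; lia.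
  have h2 : (4 <= K ^ 2)%N by rewrite expnS expn1; nia.
  apply: (@leq_trans (K ^ 2 * K ^ d * K ^ (3 * d.+1 + 1))).
    rewrite leq_mul2r; apply/orP; right. exact: leq_mul.
  rewrite -!expnD. apply: leq_pexp2l => //. lia.
have nK : (K ^ (d * d) <= n)%N.
  rewrite /n /m -expnS -expnM. apply: leq_pexp2l => //. nia.
have nPd' : (1 < 2 * INR d.+1 * Kr ^ (3 * d.+1 + 1) * alpha)%R.
  by apply: Rnot_le_lt; exact: nPd.
set L := ln (2 / alpha).
have a2 : (1 < 2 / alpha)%R.
  apply: (Rmult_lt_reg_r alpha) => //. rewrite /Rdiv Rmult_assoc Rinv_l; lra.
have L0 : (0 <= L)%R by rewrite /L -ln_1; apply: ln_le'; lra.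
have hX : (2 / alpha < Kr ^ (10 * d))%R.
  have := INR_le' powb. rewrite (INRM (4 * d.+1)) (INRM 4 d.+1) !INRX -/Kr => hp.
  apply: Rlt_le_trans hp.
  move: nPd'. set X := (Kr ^ _)%R. set Y := INR d.+1 => hn.
  have e : (2 / alpha * (2 * Y * X * alpha) = 4 * Y * X)%R by field; lra.
  have := Rmult_lt_compat_l (2 / alpha) _ _ ltac:(lra) hn.
  rewrite e Rmult_1_r. have -> : INR 4 = 4%R by simpl; lra. lra.
have hL : (L <= 10 * INR d * ln Kr)%R.
  have := ln_le' (2 / alpha) _ ltac:(lra) (Rlt_le _ _ hX).
  rewrite ln_pow // INRM. have -> : INR 10 = 10%R by simpl; lra. done.
have hc : (/ (100 * ln Kr) * L ^ 2 <= INR (d * d) * ln Kr)%R.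
  have hp : (L ^ 2 <= (10 * INR d * ln Kr) ^ 2)%R by apply: pow_incr; lra.
  apply: Rle_trans (Rmult_le_compat_l _ _ _ _ hp) _.
    apply: Rlt_le; apply: Rinv_0_lt_compat; lra.
  rewrite INRM. apply: Req_le. field. lra.
have hE : (exp (/ (100 * ln Kr) * L ^ 2) <= INR n)%R.
  apply: Rle_trans (exp_le' _ _ hc) _.
  rewrite -ln_pow // exp_ln; last by apply: pow_lt.
  rewrite -INRX. exact: INR_le' nK.
have E0 : (0 < exp (/ (100 * ln Kr) * L ^ 2))%R by apply: exp_pos.
have HsR := INR_le' HAs'. have bigR := INR_le' bigN.
rewrite (INRM n.+1) (INRX T K) S_INR in HsR.
rewrite (INRX N K) (INRM (n.+1 * n)) (INRM n.+1 n) (INRX T K) S_INR in bigR.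
rewrite -[X in exp X]/(- (/ (100 * ln Kr)) * L ^ 2)%R Ropp_mult_distr_l_reverse exp_Ropp.
set E := exp _ in E0 hE *.
have n0R : (0 <= INR n)%R by apply: pos_INR.
have : (INR (nsol k N A) * E <= INR N ^ K)%R.
  apply: Rle_trans (Rmult_le_compat_r E _ _ (Rlt_le _ _ E0) HsR) _.
  have tk : (0 <= (INR n + 1) * INR T ^ K)%R.
    apply: Rmult_le_pos; [lra | apply: pow_le; apply: pos_INR].
  apply: Rle_trans (Rmult_le_compat_l _ _ _ tk hE) _.
  have -> : ((INR n + 1) * INR T ^ K * INR n = (INR n + 1) * INR n * INR T ^ K)%R by ring.
  exact: bigR.
move=> H.
apply: (Rmult_le_reg_r E) => //.
have -> : (/ E * INR N ^ K * E = INR N ^ K)%R by field; lra.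
exact: H.
Qed.
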